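(* Let $\omega(y)=\sum_{k\ge0}a_ky^k$ ($a_k\ge 0$, radius of convergence $R>0$) and let $V$ be the covariance of the power series distribution of $\omega$. Then for every $n\in\mathbb{N}$ and every constant $C>0$, the function $x\mapsto n^2V(x/n)$ is the covariance of the power series distribution of the function $C\omega(y^n)$.
   Context: For a power series $\omega$ with non-negative coefficients and radius of convergence $R>0$, the power series distribution (PSD) of $\omega$ with parameter $y\in(0,R)$ is the law on $\{0,1,2,\dots\}$ given by $P\{\xi=k\}=a_ky^k/\omega(y)$. Its mean is $x(y)=y\omega'(y)/\omega(y)$ and its variance is $y\,x'(y)>0$ (nondegenerate case), so $x(\cdot)$ has an inverse $y=f(x)$ on its range. The covariance of the PSD of $\omega$ is the function $V(x)=f(x)/f'(x)$, i.e. the variance expressed as a function of the mean $x$. *)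

(* Defs.v *)
From Stdlib Require Import Reals Lra Arith.
From Coquelicot Require Import Coquelicot.
Open Scope R_scope.

(* A power series omega(y) = sum_k a_k y^k is given by its coefficient
   sequence a; omega(y) = PSeries a y, radius of convergence CV_radius a. *)

Definition in_param_range (a : nat -> R) (y : R) : Prop :=
  0 < y /\ Rbar_lt (Finite y) (CV_radius a).

Definition psd_mean (a : nat -> R) (y : R) : R :=
  y * Derive (PSeries a) y / PSeries a y.

(* Nondegenerate PSD: the law is not a point mass, i.e. at least two
   coefficients are nonzero (equivalently, the variance y x'(y) is > 0). *)
Definition psd_nondegenerate (a : nat -> R) : Prop :=
  exists i j : nat, i <> j /\ 0 < a i /\ 0 < a j.

(* V is the covariance of the PSD of omega: with f the inverse of the mean
   function y |-> x(y) on (0,R), V(x) = f(x)/f'(x) for every x in the range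
   of the mean function. *)
Definition psd_covariance (a : nat -> R) (V : R -> R) : Prop :=
  exists f : R -> R,
    (forall y, in_param_range a y -> f (psd_mean a y) = y) /\
    (forall y, in_param_range a y ->
        ex_derive f (psd_mean a y) /\
        V (psd_mean a y) = f (psd_mean a y) / Derive f (psd_mean a y)).

(* Coefficients of the power series C * omega(y^n) (for n >= 1):
   the coefficient of y^k is C * a_(k/n) if n divides k, and 0 otherwise. *)
Definition scaled_series (C : R) (n : nat) (a : nat -> R) (k : nat) : R :=
  if Nat.eqb (k mod n) 0 then C * a (k / n)%nat else 0.

(* Main.v *)
Require Import Defs.
From Stdlib Require Import Reals Lra Lia.
From Coquelicot Require Import Coquelicot.
Open Scope R_scope.

Lemma div_step (n K : nat) : (0<n)%nat ->
  ((S K mod n = 0 /\ S K / n = S (K/n)) \/ (S K mod n <> 0 /\ S K / n = K/n))%nat.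
Proof.
 intros Hn. pose proof (Nat.div_mod_eq K n). pose proof (Nat.mod_upper_bound K n ltac:(lia)).
 set (q := (K/n)%nat) in *. set (r := (K mod n)%nat) in *.
 destruct (Nat.eq_dec (S r) n) as [E|E].
 - left. split.
   + symmetry. apply (Nat.mod_unique _ _ (S q)); nia.
   + symmetry. apply (Nat.div_unique _ _ (S q) 0); nia.
 - right. split.
   + rewrite <- (Nat.mod_unique (S K) n q (S r)); nia.
   + symmetry. apply (Nat.div_unique _ _ q (S r)); nia.
Qed.

Lemma psum C n a x : (0<n)%nat -> forall K,
  sum_n (fun k => scaled_series C n a k * x^k) K = C * sum_n (fun j => a j * (x^n)^j) (K/n)%nat.
Proof.
intros Hn K. induction K.
- rewrite sum_O, Nat.div_0_l, sum_O by lia. unfold scaled_series. rewrite Nat.mod_0_l, Nat.div_0_l by lia. simpl. ring.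
- rewrite sum_Sn. destruct (div_step n K Hn) as [[E1 E2]|[E1 E2]].
  + rewrite E2, sum_Sn, IHK. unfold scaled_series. rewrite E1, E2. simpl Nat.eqb.
    replace (x ^ S K) with ((x^n)^(S (K/n))).
    * unfold plus; simpl; ring.
    * rewrite <- pow_mult. f_equal. pose proof (Nat.div_mod_eq (S K) n). lia.
  + rewrite E2, IHK. unfold scaled_series.
    destruct (Nat.eqb_spec (S K mod n) 0); [contradiction|].
    unfold plus; simpl; ring.
Qed.

Lemma series_id C n a x : (0<n)%nat -> ex_series (fun j => a j * (x^n)^j) ->
  is_series (fun k => scaled_series C n a k * x^k) (C * Series (fun j => a j * (x^n)^j)).
Proof.
 intros Hn Hex. apply Series_correct in Hex.
 assert (H : is_lim_seq (sum_n (fun j => a j * (x^n)^j)) (Series (fun j => a j * (x^n)^j))) by exact Hex.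
 apply (is_lim_seq_subseq _ _ (fun K => (K/n)%nat)) in H.
 - apply (is_lim_seq_scal_l _ C) in H.
   apply (is_lim_seq_ext _ (sum_n (fun k => scaled_series C n a k * x^k))) in H.
   + exact H.
   + intros K. symmetry. apply psum; auto.
 - intros P [N HN]. exists (N*n)%nat. intros k Hk. apply HN.
   apply Nat.div_le_lower_bound; lia.
Qed.
Lemma pow_strict x y m : 0 <= x < y -> x ^ S m < y ^ S m.
Proof.
  intros H. simpl. assert (x^m <= y^m) by (apply pow_incr; lra).
  assert (0 <= x^m) by (apply pow_le; lra). assert (0 < y^m) by (apply pow_lt; lra). nra.
Qed.

Lemma term_le_sum (u: nat->R): (forall k, 0<=u k) -> forall j, 0 <= sum_n u j /\ u j <= sum_n u j.
Proof.
  intros Hu j. induction j.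
  - rewrite sum_O. split; [apply Hu|lra].
  - rewrite sum_Sn. unfold plus; simpl. specialize (Hu (S j)). lra.
Qed.

Lemma b_nonneg C n a z k : 0 < C -> (forall k, 0 <= a k) -> 0 <= z ->
  0 <= scaled_series C n a k * z^k.
Proof.
  intros HC Ha Hz. unfold scaled_series. destruct Nat.eqb.
  - apply Rmult_le_pos; [apply Rmult_le_pos; [lra|apply Ha]|apply pow_le; lra].
  - lra.
Qed.

Lemma radius_b C n a z : 0 < C -> (0<n)%nat -> (forall k, 0<=a k) -> 0 < z ->
  Rbar_lt z (CV_radius (scaled_series C n a)) -> Rbar_le (z^n) (CV_radius a).
Proof.
  intros HC Hn Ha Hz Hr.
  assert (Hz': Rbar_lt (Rabs z) (CV_radius (scaled_series C n a))) by (rewrite Rabs_pos_eq; [exact Hr|lra]).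
  apply CV_disk_inside, ex_series_Rabs in Hz'. destruct Hz' as [L HL].
  assert (HL': is_lim_seq (sum_n (fun k => scaled_series C n a k * z^k)) L) by exact HL.
  assert (Hinc: forall m, sum_n (fun k => scaled_series C n a k * z^k) m <= sum_n (fun k => scaled_series C n a k * z^k) (S m)).
  { intros m. rewrite sum_Sn. pose proof (b_nonneg C n a z (S m) HC Ha ltac:(lra)).
    unfold plus; simpl; simpl in H. lra. }
  assert (Hle := is_lim_seq_incr_compare _ _ HL' Hinc).
  apply (proj1 (CV_radius_bounded a)). exists (/C * L). intros j.
  assert (Hnn: forall j, 0 <= a j * (z^n)^j) by (intros; apply Rmult_le_pos; [apply Ha| apply pow_le, pow_le; lra]).
  rewrite Rabs_pos_eq by apply Hnn.
  destruct (term_le_sum _ Hnn j) as [_ H1].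
  pose proof (psum C n a z Hn (n*j)) as H2.
  rewrite (Nat.mul_comm n j), Nat.div_mul in H2 by lia.
  specialize (Hle (j*n)%nat).
  assert (sum_n (fun j0 : nat => a j0 * (z ^ n) ^ j0) j = /C * sum_n (fun k : nat => scaled_series C n a k * z ^ k) (j * n)) as H3
    by (rewrite H2, <- Rmult_assoc, Rinv_l by lra; exact (eq_sym (Rmult_1_l _))).
  assert (0 < /C) by (apply Rinv_0_lt_compat; lra).
  eapply Rle_trans; [exact H1|]. rewrite H3. apply Rmult_le_compat_l; [lra|exact Hle].
Qed.

Lemma range_lemma C n a y : 0 < C -> (0<n)%nat -> (forall k, 0<=a k) ->
  in_param_range (scaled_series C n a) y ->
  in_param_range a (y^n) /\ exists z1, y < z1 /\ Rbar_lt (z1^n) (CV_radius a).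
Proof.
  intros HC Hn Ha [Hy Hr].
  assert (exists z2, y < z2 /\ Rbar_lt z2 (CV_radius (scaled_series C n a))) as [z2 [Hz2 Hz2']].
  { destruct (CV_radius (scaled_series C n a)) as [r| |]; simpl in *.
    - exists ((y+r)/2); simpl; lra.
    - exists (y+1); simpl; split; [lra|exact I].
    - contradiction. }
  pose proof (radius_b C n a z2 HC Hn Ha ltac:(lra) Hz2') as Hle.
  destruct n as [|m]; [lia|].
  assert (H1: Rbar_lt (((y+z2)/2)^(S m)) (CV_radius a)).
  { eapply Rbar_lt_le_trans; [|exact Hle]. simpl. apply pow_strict; lra. }
  split.
  - split. apply pow_lt; lra.
    eapply Rbar_lt_le_trans; [|exact Hle]. simpl. apply pow_strict; lra.
  - exists ((y+z2)/2). split; [lra|exact H1].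
Qed.

Lemma mean_lemma C n a y : 0 < C -> (0<n)%nat -> (forall k, 0<=a k) ->
  in_param_range (scaled_series C n a) y ->
  psd_mean (scaled_series C n a) y = INR n * psd_mean a (y^n).
Proof.
  intros HC Hn Ha Hy.
  destruct (range_lemma C n a y HC Hn Ha Hy) as [[Hyn Hyr] [z1 [Hz1 Hz1r]]].
  destruct Hy as [Hy _].
  assert (Heq: forall t, Rabs t <= z1 -> PSeries (scaled_series C n a) t = C * PSeries a (t^n)).
  { intros t Ht.
    assert (Hlt: Rbar_lt (Rabs (t^n)) (CV_radius a)).
    { eapply Rbar_le_lt_trans; [|exact Hz1r]. simpl. rewrite <- RPow_abs.
      apply pow_incr. split; [apply Rabs_pos|exact Ht]. }
    apply CV_disk_inside, ex_series_Rabs in Hlt.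
    apply is_series_unique. apply series_id; auto. }
  assert (Hloc: locally y (fun t => C * PSeries a (t^n) = PSeries (scaled_series C n a) t)).
  { assert (He: 0 < z1 - y) by lra. exists (mkposreal _ He). intros t Ht.
    unfold ball in Ht; simpl in Ht. unfold AbsRing_ball, minus, plus, opp, abs in Ht. simpl in Ht.
    symmetry. apply Heq. apply Rabs_def2 in Ht as [? ?]. apply Rabs_le. lra. }
  assert (HD: is_derive (fun t => C * PSeries a (t^n)) y
     (C * (INR n * 1 * y^(pred n) * Derive (PSeries a) (y^n)))).
  { auto_derive.
    - apply ex_derive_PSeries. rewrite Rabs_pos_eq; [exact Hyr|lra].
    - change (fun x : R => PSeries a x) with (PSeries a). ring. }
  apply (is_derive_ext_loc _ _ _ _ Hloc) in HD.
  unfold psd_mean. rewrite (is_derive_unique _ _ _ HD).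
  rewrite Heq by (rewrite Rabs_pos_eq by lra; lra).
  assert (Hp: y * y ^ pred n = y ^ n) by (destruct n; [lia|reflexivity]).
  destruct (Req_dec (PSeries a (y^n)) 0) as [E|E].
  - rewrite E. unfold Rdiv. rewrite Rmult_0_r, Rinv_0. ring.
  - set (P := PSeries a (y^n)) in *. set (D := Derive (PSeries a) (y^n)) in *. rewrite <- Hp. field. split; [exact E|lra].
Qed.

Theorem lemma4 (a : nat -> R) (V : R -> R) (n : nat) (C : R) :
  (forall k, 0 <= a k) ->
  Rbar_lt (Finite 0) (CV_radius a) ->
  psd_nondegenerate a ->
  psd_covariance a V ->
  (1 <= n)%nat ->
  0 < C ->
  psd_covariance (scaled_series C n a)
    (fun x => (INR n) ^ 2 * V (x / INR n)).
Proof.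
  intros Ha _ _ [f [Hf1 Hf2]] Hn1 HC.
  assert (Hn : (0 < n)%nat) by lia.
  assert (HnR : 0 < INR n) by (apply lt_0_INR; lia).
  set (g := fun x => exp (ln (f (x / INR n)) / INR n)).
  assert (Hg: forall y, in_param_range (scaled_series C n a) y ->
     g (psd_mean (scaled_series C n a) y) = y).
  { intros y Hy. destruct (range_lemma C n a y HC Hn Ha Hy) as [Hya _].
    rewrite mean_lemma by auto. unfold g.
    replace (INR n * psd_mean a (y^n) / INR n) with (psd_mean a (y^n)) by (field; lra).
    rewrite Hf1 by auto. destruct Hy as [Hy _]. rewrite ln_pow by lra.
    replace (INR n * ln y / INR n) with (ln y) by (field; lra). apply exp_ln; lra. }
  exists g. split; [exact Hg|].
  intros y Hy. pose proof (Hg y Hy) as Hgy.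
  destruct (range_lemma C n a y HC Hn Ha Hy) as [Hya _].
  destruct (Hf2 _ Hya) as [Hd HV]. pose proof (Hf1 _ Hya) as Hfp.
  pose proof Hy as [Hy0 _].
  rewrite mean_lemma in * by auto.
  set (p := psd_mean a (y^n)) in *.
  assert (E : INR n * p / INR n = p) by (field; lra).
  assert (HD: is_derive g (INR n * p) (/ INR n * Derive f p * / f p * / INR n * g (INR n * p))).
  { unfold g. auto_derive.
    - unfold Rdiv in *. rewrite E. split; [exact Hd|]. rewrite Hfp. split; [apply pow_lt; lra|exact I].
    - unfold Rdiv. replace (INR n * p * / INR n) with p by (field; lra).
      change (fun x : R => f x) with f. rewrite Rmult_1_l. reflexivity. }
  split; [eexists; exact HD|].
  rewrite (is_derive_unique _ _ _ HD), Hgy, E, HV, Hfp.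
  assert (0 < y^n) by (apply pow_lt; lra).
  destruct (Req_dec (Derive f p) 0) as [Z|Z].
  - rewrite Z. unfold Rdiv. replace (/ INR n * 0 * / y ^ n * / INR n * y) with 0 by ring. rewrite Rinv_0. ring.
  - field. repeat split; lra || auto.
Qed.
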